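(* Let $S$ be a reflective numerical semigroup with $\mathrm{g}(S)=g\ge1$ and $\mathrm{m}(S)=a$. Then: $S$ is symmetric if and only if $g\equiv1\pmod a$; $S$ is pseudo-symmetric if and only if $g\equiv2\pmod a$; and $S$ is irreducible if and only if $g\equiv 1$ or $g\equiv 2\pmod a$.
   Context: A numerical semigroup is a submonoid $S$ of $(\mathbb{N}_0,+)$ with finite complement; $\mathrm{g}(S)$ is the number of its gaps (elements of $\mathbb{N}_0\setminus S$), $\mathrm{F}(S)$ its largest gap, and $\mathrm{m}(S)$ its smallest positive element. $S$ is symmetric if for every $z\in\mathbb{Z}$ exactly one of $z$ and $\mathrm{F}(S)-z$ lies in $S$. $S$ is pseudo-symmetric if $\mathrm{F}(S)$ is even and for every $z\in\mathbb{Z}\setminus\{\mathrm{F}(S)/2\}$ exactly one of $z$ and $\mathrm{F}(S)-z$ lies in $S$. $S$ is irreducible if it is not the intersection of two numerical semigroups properly containing $S$. A numerical semigroup $S$ of genus $g\ge1$ is called reflective if for every $z\in\{0,1,\dots,g-1\}$ exactly one of $z$ and $z+g$ belongs to $S$. *)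

(* Defs.v *)
From mathcomp Require Import all_boot all_order all_algebra.
Set Implicit Arguments. Unset Strict Implicit. Unset Printing Implicit Defensive.
Import GRing.Theory Num.Theory.

Record numsg := NumSg {
  nsg_mem :> pred nat;
  nsg_c : nat;
  nsg_0 : nsg_mem 0;
  nsg_add : forall x y, nsg_mem x -> nsg_mem y -> nsg_mem (x + y);
  nsg_cofin : forall n, nsg_c <= n -> nsg_mem n
}.

Definition memZ (S : numsg) (z : int) : bool := (0 <= z)%R && S `|z|%N.

(* genus: number of gaps (all gaps are < nsg_c S) *)
Definition genus (S : numsg) : nat := count (fun n => ~~ S n) (iota 0 (nsg_c S)).

(* Frobenius number: the largest gap (-1 if there is no gap) *)
Definition frob (S : numsg) : int :=
  ((\max_(n < nsg_c S | ~~ S n) n.+1)%:Z - 1)%R.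

Lemma mult_ex (S : numsg) : exists n, (0 < n) && S n.
Proof. exists (nsg_c S).+1; rewrite ltn0Sn /=; apply: nsg_cofin; exact: leqnSn. Qed.

Definition mult (S : numsg) : nat := ex_minn (mult_ex S).

Definition symmetric_nsg (S : numsg) : Prop :=
  forall z : int, memZ S z != memZ S (frob S - z)%R.

Definition pseudo_symmetric_nsg (S : numsg) : Prop :=
  (2 %| frob S)%Z /\
  forall z : int, z != (frob S %/ 2)%Z -> memZ S z != memZ S (frob S - z)%R.

Definition proper_sub (S T : numsg) : Prop :=
  (forall n, S n -> T n) /\ exists n, T n && ~~ S n.

Definition irreducible_nsg (S : numsg) : Prop :=
  ~ exists T1 T2 : numsg,
      [/\ proper_sub S T1, proper_sub S T2 & forall n, S n = T1 n && T2 n].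

Definition reflective_nsg (S : numsg) : Prop :=
  1 <= genus S /\ forall z, z < genus S -> S z != S (z + genus S).

(* Main.v *)
Require Import Defs.
From mathcomp Require Import all_boot all_order all_algebra.
From mathcomp Require Import zify.
Set Implicit Arguments. Unset Strict Implicit.


Lemma mult_spec (S : numsg) : [/\ 0 < mult S, S (mult S) &
   forall n, 0 < n -> S n -> mult S <= n].
Proof.
rewrite /mult; case: ex_minnP => m /andP[m0 Sm] H; split => // n n0 Sn.
by apply: H; rewrite n0.
Qed.

Lemma S_mul (S : numsg) x k : S x -> S (x * k).
Proof.
move=> Sx; elim: k => [|k IH]; first by rewrite muln0 nsg_0.
by rewrite mulnS; apply: nsg_add.
Qed.

Lemma S_dvd (S : numsg) n : mult S %| n -> S n.
Proof. by case/dvdnP=> k ->; rewrite mulnC; apply: S_mul; case: (mult_spec S). Qed.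

Lemma reflE (S : numsg) : reflective_nsg S ->
  forall z, z < genus S -> S (z + genus S) = ~~ S z.
Proof. by case=> _ hR z /hR; case: (S z); case: (S (z + _)). Qed.

Lemma low_part (S : numsg) : reflective_nsg S ->
  forall x, x < genus S -> S x = (mult S %| x).
Proof.
move=> R; have hR := @reflE S R.
case: (mult_spec S) => a0 Sa amin.
elim/ltn_ind => x IH xg.
apply/idP/idP; last exact: S_dvd.
move=> Sx; case: (posnP x) => [->|x0]; first exact: dvdn0.
have ax := amin _ x0 Sx.
case: (boolP (mult S %| x)) => // nax.
have xa : x - mult S < x by lia.
case: (boolP (S (x - mult S))) => Sxa.
  have := IH _ xa ltac:(lia); rewrite Sxa => /esym hd.
  by move: nax; rewrite -(subnK ax) dvdn_add ?dvdnn.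
have Sxag := hR (x - mult S) ltac:(lia); rewrite Sxa /= in Sxag.
have := hR x xg; rewrite Sx /=.
have -> : x + genus S = (x - mult S + genus S) + mult S by lia.
by rewrite nsg_add.
Qed.

Lemma high_part (S : numsg) : reflective_nsg S ->
  forall x, genus S <= x < 2 * genus S -> S x = ~~ (mult S %| x - genus S).
Proof.
move=> R x /andP[h1 h2]; have [_ hR] := R.
have := @reflE S R (x - genus S) ltac:(lia); rewrite subnK // (@low_part S R (x - genus S)) //.
lia.
Qed.

Lemma top_part (S : numsg) : reflective_nsg S ->
  forall x, 2 * genus S <= x -> S x.
Proof.
move=> R x hx; have [g1 hR] := R.
apply: contraT => nSx.
have xc : x < nsg_c S by rewrite ltnNge; apply: contra nSx; apply: nsg_cofin.
have : genus S = count (fun n => ~~ S n) (iota 0 (nsg_c S)) by [].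
have -> : nsg_c S = genus S + genus S + (nsg_c S - 2 * genus S) by lia.
rewrite iotaD count_cat iotaD count_cat add0n.
have -> : count (fun n => ~~ S n) (iota (genus S) (genus S)) = count S (iota 0 (genus S)).
  rewrite -[X in iota X _](addn0 (genus S)) iotaDl count_map.
  apply: eq_in_count => z; rewrite mem_iota => /andP[_ /= zg].
  by rewrite /= addnC (@reflE S R z zg) negbK.
have hc : count (fun n => ~~ S n) (iota 0 (genus S)) + count S (iota 0 (genus S)) = genus S.
  by rewrite addnC (count_predC S) size_iota.
rewrite hc.
have : 0 < count (fun n => ~~ S n) (iota (0 + (genus S + genus S)) (nsg_c S - 2 * genus S)).
  rewrite -has_count; apply/hasP; exists x => //; rewrite mem_iota; lia.
lia.
Qed.


Definition Pm (a g x : nat) : bool :=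
  if x < g then a %| x else if x < 2 * g then ~~ (a %| x - g) else true.

Lemma ndvd_small a r : 0 < r < a -> ~~ (a %| r).
Proof. by case/andP=> r0 ra; apply/negP => /(dvdn_leq r0); rewrite leqNgt ra. Qed.

Lemma dvd_le a k r y : r < a -> a %| y -> y <= k * a + r -> y <= k * a.
Proof.
move=> ra /dvdnP[q ->] hy; rewrite leq_mul2r; apply/orP; right.
rewrite leqNgt; apply/negP => kq.
have : k.+1 * a <= q * a by rewrite leq_mul2r kq orbT.
lia.
Qed.


(* general setting: a >= 2, g = k*a + r + 1, r < a, F = g + k*a *)
Lemma gapF (S : pred nat) a g k r : (forall x, S x = Pm a g x) -> 2 <= a ->
  g = (k * a + r).+1 -> r < a -> ~~ S (g + k * a).
Proof.
move=> SE a2 hg ra; rewrite SE /Pm.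
have -> : (g + k * a < g) = false by lia.
have -> : (g + k * a < 2 * g) = true by lia.
by rewrite addKn dvdn_mull.
Qed.

Lemma aboveF (S : pred nat) a g k r : (forall x, S x = Pm a g x) -> 2 <= a ->
  g = (k * a + r).+1 -> r < a -> forall n, g + k * a < n -> S n.
Proof.
move=> SE a2 hg ra n hn; rewrite SE /Pm.
have -> : (n < g) = false by lia.
case: ifP => // n2; apply/negP => hd.
have := @dvd_le a k r (n - g) ra hd ltac:(lia); lia.
Qed.

Lemma gaps_leF (S : pred nat) a g k r : (forall x, S x = Pm a g x) -> 2 <= a ->
  g = (k * a + r).+1 -> r < a -> forall n, ~~ S n -> n <= g + k * a.
Proof.
move=> SE a2 hg ra n; apply: contraR; rewrite -ltnNge; exact: aboveF SE a2 hg ra n.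
Qed.

Lemma sym0 (S : pred nat) a g k : (forall x, S x = Pm a g x) -> 2 <= a ->
  g = (k * a).+1 -> forall n, n <= g + k * a -> S n != S (g + k * a - n).
Proof.
move=> SE a2 hg.
have H : forall n, n < g -> S n != S (g + k * a - n).
  move=> n ng; rewrite !SE /Pm ng.
  have -> : (g + k * a - n < g) = false by lia.
  have -> : (g + k * a - n < 2 * g) = true by lia.
  have -> : g + k * a - n - g = k * a - n by lia.
  by rewrite dvdn_subr ?dvdn_mull //; [case: (a %| n)|lia].
move=> n hn; case: (ltnP n g) => ng; first exact: H.
have := H (g + k * a - n) ltac:(lia).
have -> : g + k * a - (g + k * a - n) = n by lia.
by rewrite eq_sym.
Qed.

Lemma sym1 (S : pred nat) a g k : (forall x, S x = Pm a g x) -> 2 <= a ->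
  g = (k * a + 1).+1 -> forall n, n <= g + k * a -> n != g.-1 ->
  S n != S (g + k * a - n).
Proof.
move=> SE a2 hg.
have H : forall n, n < g.-1 -> S n != S (g + k * a - n).
  move=> n ng; rewrite !SE /Pm.
  have -> : (n < g) = true by lia.
  have -> : (g + k * a - n < g) = false by lia.
  have -> : (g + k * a - n < 2 * g) = true by lia.
  have -> : g + k * a - n - g = k * a - n by lia.
  by rewrite dvdn_subr ?dvdn_mull //; [case: (a %| n)|lia].
move=> n hn hn1; case: (ltnP n g.-1) => ng; first exact: H.
have := H (g + k * a - n) ltac:(lia).
have -> : g + k * a - (g + k * a - n) = n by lia.
by rewrite eq_sym.
Qed.

Lemma bad_pair (S : pred nat) a g k r : (forall x, S x = Pm a g x) -> 2 <= a ->
  g = (k * a + r).+1 -> r < a -> 0 < r ->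
  ~~ S g.-1 /\ ~~ S (g + k * a - g.-1).
Proof.
move=> SE a2 hg ra r0; rewrite !SE /Pm.
have -> : (g.-1 < g) = true by lia.
have -> : (g + k * a - g.-1 < g) = true by lia.
have -> : g.-1 = k * a + r by lia.
have -> : g + k * a - (k * a + r) = k * a + 1 by lia.
rewrite !dvdn_addr ?dvdn_mull //; split; apply: ndvd_small; lia.
Qed.

Lemma H1g_lem (S : pred nat) a g : (forall x, S x = Pm a g x) -> 2 <= a -> 0 < g ->
  forall s, S s -> 0 < s -> S (g.-1 + s).
Proof.
move=> SE a2 g1 s Ss s0; rewrite SE /Pm.
have Sg : ~~ S g.
  rewrite SE /Pm ltnn; have -> : g < 2 * g by lia.
  by rewrite subnn dvdn0.
have -> : (g.-1 + s < g) = false by lia.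
case: (ltnP s g) => sg.
  move: Ss; rewrite SE /Pm sg => as_.
  have -> : g.-1 + s < 2 * g by lia.
  apply/negP => ha; have := dvdn_sub as_ ha.
  have -> : s - (g.-1 + s - g) = 1 by lia.
  by rewrite dvdn1 => /eqP e; move: a2; rewrite e.
have sg' : s != g by apply: contraNneq Sg => <-.
have -> : (g.-1 + s < 2 * g) = false by lia.
by [].
Qed.

Lemma H2g_lem (S : pred nat) a g k r : (forall x, S x = Pm a g x) -> 2 <= a ->
  g = (k * a + r).+1 -> r < a -> 2 <= r -> S (g.-1 + g.-1).
Proof.
move=> SE a2 hg ra r2; rewrite SE /Pm.
have -> : (g.-1 + g.-1 < g) = false by lia.
have -> : (g.-1 + g.-1 < 2 * g) = true by lia.
have -> : g.-1 + g.-1 - g = k * a + r.-1 by lia.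
by rewrite dvdn_addr ?dvdn_mull // ndvd_small //; lia.
Qed.

Import GRing.Theory Num.Theory.

Lemma structure (S : numsg) : reflective_nsg S ->
  [/\ 2 <= mult S, ~~ (mult S %| genus S), 0 < genus S &
      forall x, S x = Pm (mult S) (genus S) x].
Proof.
move=> R; have [g1 _] := R.
have SE : forall x, S x = Pm (mult S) (genus S) x.
  move=> x; rewrite /Pm; case: (ltnP x (genus S)) => h1; first exact: low_part.
  case: (ltnP x (2 * genus S)) => h2; first by apply: high_part => //; apply/andP; split.
  by apply: top_part.
have Sg : ~~ S (genus S).
  rewrite SE /Pm ltnn; have -> : genus S < 2 * genus S by lia.
  by rewrite subnn dvdn0.
have nd : ~~ (mult S %| genus S) by apply: contra Sg; apply: S_dvd.
split => //; have [a0 _ _] := mult_spec S.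
by case: (mult S) a0 nd => [|[|m]] //; rewrite dvd1n.
Qed.

Definition ext (S : numsg) h (H1 : forall s, S s -> 0 < s -> S (h + s))
  (H2 : S (h + h)) : numsg.
refine (@NumSg (fun n => S n || (n == h)) (nsg_c S) _ _ _).
- by rewrite nsg_0.
- move=> x y /orP[Sx|/eqP->] /orP[Sy|/eqP->].
  + by rewrite nsg_add.
  + case: (posnP x) => [->|x0]; first by rewrite add0n eqxx orbT.
    by rewrite addnC H1.
  + case: (posnP y) => [->|y0]; first by rewrite addn0 eqxx orbT.
    by rewrite H1.
  + by rewrite H2.
- by move=> n hn; rewrite nsg_cofin.
Defined.

Lemma memZ_pos (S : numsg) (n : nat) : memZ S n = S n.
Proof. by []. Qed.

Lemma memZ_neg (S : numsg) (n : nat) : memZ S (Negz n) = false.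
Proof. by []. Qed.

Lemma int_xor (S : numsg) (F : nat) (ex : pred nat) :
  (forall n, F < n -> S n) ->
  (forall n, n <= F -> ~~ ex n -> S n != S (F - n)) ->
  forall z : int, (forall n : nat, z = Posz n -> ~~ ex n) ->
  memZ S z != memZ S (F%:Z - z)%R.
Proof.
move=> hab hx [n|n] hz.
- case: (leqP n F) => hn.
    by rewrite subzn // !memZ_pos; apply: hx => //; apply: hz.
  rewrite memZ_pos hab // /memZ.
  have -> : (0 <= F%:Z - n%:Z)%R = false by lia.
  by [].
- have -> : (F%:Z - Negz n = (F + n.+1)%:Z)%R by rewrite NegzE opprK PoszD.
  by rewrite memZ_pos memZ_neg hab //; lia.
Qed.

Import GRing.Theory Num.Theory.

Lemma frobE (S : numsg) (F : nat) : ~~ S F -> (forall n, ~~ S n -> n <= F) ->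
  frob S = Posz F.
Proof.
move=> SF hF.
have Fc : F < nsg_c S by rewrite ltnNge; apply: contra SF; apply: nsg_cofin.
rewrite /frob.
have -> : \max_(n < nsg_c S | ~~ S n) n.+1 = F.+1.
  apply/eqP; rewrite eqn_leq; apply/andP; split.
    by apply/bigmax_leqP => i hi; rewrite ltnS hF.
  exact: (@leq_bigmax_cond _ (fun n : 'I_(nsg_c S) => ~~ S n) (fun n => n.+1) (Ordinal Fc)).
lia.
Qed.

Lemma modE a g k r : 2 <= a -> ~~ (a %| g) -> g = (k * a + r).+1 -> r < a ->
  g %% a = r.+1.
Proof.
move=> a2 nd hg ra.
have ra1 : r.+1 < a.
  rewrite ltn_neqAle ra andbT; apply/negP => /eqP e; move: nd.
  by rewrite hg -addnS e dvdn_addr ?dvdn_mull ?dvdnn.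
by rewrite hg -addnS modnMDl modn_small.
Qed.

Import GRing.Theory Num.Theory.

Unset Implicit Arguments.

Theorem mainTheorem8 (S : numsg) :
  reflective_nsg S ->
  [/\ symmetric_nsg S <-> genus S = 1 %[mod mult S],
      pseudo_symmetric_nsg S <-> genus S = 2 %[mod mult S]
    & irreducible_nsg S <-> (genus S = 1 %[mod mult S] \/ genus S = 2 %[mod mult S])].
Proof.
move=> R; have [a2 nd g1 SE] := structure R.
pose k := (genus S).-1 %/ mult S; pose r := (genus S).-1 %% mult S.
have hg : genus S = (k * mult S + r).+1 by rewrite /k /r -divn_eq; lia.
have ra : r < mult S by rewrite /r ltn_pmod //; lia.
have gm := modE a2 nd hg ra.
have SF := gapF SE a2 hg ra.
have hab := aboveF SE a2 hg ra.
have hle := gaps_leF SE a2 hg ra.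
have fE := frobE SF hle.
have e1 : genus S = 1 %[mod mult S] <-> r = 0.
  by rewrite gm modn_small //; split => [[]|->].
have e2 : genus S = 2 %[mod mult S] <-> r = 1.
  rewrite gm; case: (ltnP 2 (mult S)) => a3.
    by rewrite modn_small //; split => [[]|->].
  have -> : mult S = 2 by lia.
  by rewrite modnn; split => //; lia.
have Hsym : symmetric_nsg S <-> r = 0.
  split.
    move=> hs; apply/eqP; apply: contraT => r0.
    have [b1 b2] := bad_pair SE a2 hg ra ltac:(lia).
    have := hs (Posz (genus S).-1); rewrite fE subzn; last lia.
    by rewrite !memZ_pos (negbTE b1) (negbTE b2).
  move=> r0 z; rewrite fE; apply: (@int_xor S _ pred0) => //.
  move=> n hn _; apply: sym0 => //; by rewrite hg r0 addn0.
have F2 : r = 1 -> genus S + k * mult S = (genus S).-1 * 2 by lia.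
have Hps : pseudo_symmetric_nsg S <-> r = 1.
  rewrite /pseudo_symmetric_nsg fE divz_nat -topredE /= /dvdz /=.
  split.
    case=> h2 hx; apply/eqP; apply: contraT => r1.
    have hF := divnK h2.
    case: (posnP r) => r0.
      move: hF; set K := k * mult S; lia.
    have [b1 b2] := bad_pair SE a2 hg ra ltac:(lia).
    have := hx (Posz (genus S).-1); rewrite subzn; last lia.
    rewrite !memZ_pos (negbTE b1) (negbTE b2) /= => h; apply: h.
    apply/negP => /eqP [] e; move: hF; rewrite -e; set K := k * mult S; lia.
  move=> r1; rewrite F2 // mulnK // dvdn_mull //; split => // z hz.
  rewrite -F2 //; apply: (@int_xor S _ (pred1 (genus S).-1)) => //.
    by move=> n hn /= hne; apply: sym1 => //; rewrite hg r1.
  by move=> n e; apply: contra hz => /eqP <-; rewrite e.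
have keyF : r = 0 \/ r = 1 -> forall T : numsg, Defs.proper_sub S T -> T (genus S + k * mult S).
  move=> hr T [hsub [h /andP[Th nSh]]].
  have hh := hle _ nSh.
  have TFh : ~~ S (genus S + k * mult S - h) = false -> T (genus S + k * mult S).
    move=> e; have := nsg_add Th (hsub _ (negbFE e)); rewrite subnKC //.
  case: hr => hr.
    apply: TFh; apply: negbTE.
    have := sym0 SE a2 (n := h) ltac:(rewrite hg hr addn0 //) hh.
    by rewrite (negbTE nSh); case: (S _).
  case: (eqVneq h (genus S).-1) => eh.
    by rewrite F2 // -eh mulnC mul2n -addnn nsg_add.
  apply: TFh; apply: negbTE.
  have := sym1 SE a2 (n := h) ltac:(rewrite hg hr //) hh eh.
  by rewrite (negbTE nSh); case: (S _).
have Hirr : irreducible_nsg S <-> r = 0 \/ r = 1.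
  split; last first.
    move=> hr [T1 [T2 [p1 p2 hI]]].
    by move: SF; rewrite hI (keyF hr _ p1) (keyF hr _ p2).
  move=> hirr; case: (ltnP r 2) => hr; first by lia.
  exfalso; apply: hirr.
  have Sg : ~~ S (genus S).
    rewrite SE /Pm ltnn; have -> : genus S < 2 * genus S by lia.
    by rewrite subnn dvdn0.
  have H1F : forall s, S s -> 0 < s -> S (genus S + k * mult S + s).
    by move=> s _ s0; apply: hab; lia.
  have H2F : S (genus S + k * mult S + (genus S + k * mult S)) by apply: hab; lia.
  have H1g := H1g_lem SE a2 g1.
  have H2g := H2g_lem SE a2 hg ra hr.
  exists (ext H1F H2F), (ext H1g H2g); split.
  - split; first by move=> n /= ->.
    by exists (genus S + k * mult S); rewrite /= eqxx orbT SF.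
  - split; first by move=> n /= ->.
    have Sg1 : ~~ S (genus S).-1 by have [] := bad_pair SE a2 hg ra ltac:(lia).
    by exists (genus S).-1; rewrite /= eqxx orbT Sg1.
  - move=> n /=; case: (S n) => //=.
    case: (eqVneq n (genus S + k * mult S)) => // ->; apply/esym/negbTE; rewrite /=; apply/eqP; lia.
split.
- by rewrite Hsym e1.
- by rewrite Hps e2.
- by rewrite Hirr e1 e2.
Qed.
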